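(* Let $n$ be a positive integer and let $x$ be a complex number such that no denominator below vanishes. Then \[ \sum_{k=0}^{n}(-1)^k\binom{n}{k}\frac{\binom{2x+k}{k}}{\binom{2x+n+k}{k}}H_{k}(x) =4^{n-1}\frac{\binom{n-\frac{1}{2}}{n}}{\binom{2x+2n}{n}}\big\{H_n(x)+H_n-2H_{2n}\big\} -\frac{4^{n-1}}{n}\frac{\binom{x+n-\frac{1}{2}}{n}}{\binom{2x+2n}{n}\binom{x+n}{n}}. \]
   Context: For complex $z$ and a nonnegative integer $k$, $\binom{z}{k}=\frac{z(z-1)\cdots(z-k+1)}{k!}$ (with $\binom{z}{0}=1$). For complex $x$ and nonnegative integer $m$, $H_0(x)=0$ and $H_m(x)=\sum_{j=1}^m\frac{1}{x+j}$; $H_m=H_m(0)=\sum_{j=1}^m\frac1j$. The parameter $x$ is assumed to be such that all denominators are nonzero. *)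

(* Defs.v *)
From HB Require Import structures.
From mathcomp Require Import all_boot all_order all_algebra.
From mathcomp Require Import reals complex.
Set Implicit Arguments. Unset Strict Implicit. Unset Printing Implicit Defensive.
Import Order.TTheory GRing.Theory Num.Theory.
Local Open Scope ring_scope.

Definition binom {F : fieldType} (z : F) (k : nat) : F :=
  (\prod_(i < k) (z - i%:R)) / (k`!)%:R.

Definition Hx {F : fieldType} (m : nat) (x : F) : F :=
  \sum_(1 <= j < m.+1) (x + j%:R)^-1.

Definition Hn {F : fieldType} (m : nat) : F := Hx m 0.

(* Main.v *)
Require Import Defs.
From HB Require Import structures.
From mathcomp Require Import all_boot all_order all_algebra.
From mathcomp Require Import reals complex.
From mathcomp Require Import ring lra.
Set Implicit Arguments. Unset Strict Implicit. Unset Printing Implicit Defensive.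
Import Order.TTheory GRing.Theory Num.Theory.
Local Open Scope ring_scope.


Section Polyish.
Variable C : fieldType.
Variable good : C -> Prop.

Definition polyish (f : C -> C) :=
  exists (d p : {poly C}), (forall z, good z -> d.[z] != 0) /\
                            (forall z, good z -> f z * d.[z] = p.[z]).

Lemma ps_ext f g : polyish f -> (forall z, f z = g z) -> polyish g.
Proof.
move=> [d [p [hd hf]]] e; exists d, p; split=> // z gz; by rewrite -e hf.
Qed.

Lemma ps_const c : polyish (fun _ => c).
Proof. exists 1, c%:P; split=> z _; rewrite ?hornerE ?oner_neq0 //= mulr1. Qed.

Lemma ps_id : polyish (fun z => z).
Proof. exists 1, 'X; split=> z _; rewrite ?hornerE ?oner_neq0 //= mulr1. Qed.

Lemma ps_add f g : polyish f -> polyish g -> polyish (fun z => f z + g z).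
Proof.
move=> [df [pf [hdf hf]]] [dg [pg [hdg hg]]].
exists (df * dg), (pf * dg + pg * df); split=> z gz.
  by rewrite hornerM mulf_neq0 // ?hdf ?hdg.
rewrite ?hornerD ?hornerM -hf // -hg //; ring.
Qed.

Lemma ps_mul f g : polyish f -> polyish g -> polyish (fun z => f z * g z).
Proof.
move=> [df [pf [hdf hf]]] [dg [pg [hdg hg]]].
exists (df * dg), (pf * pg); split=> z gz.
  by rewrite hornerM mulf_neq0 // ?hdf ?hdg.
rewrite ?hornerD ?hornerM -hf // -hg //; ring.
Qed.

Lemma ps_opp f : polyish f -> polyish (fun z => - f z).
Proof.
move=> [df [pf [hdf hf]]]; exists df, (- pf); split=> // z gz.
by rewrite hornerN -hf // mulNr.
Qed.

Lemma ps_sub f g : polyish f -> polyish g -> polyish (fun z => f z - g z).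
Proof. by move=> hf hg; apply: ps_add => //; apply: ps_opp. Qed.

Lemma ps_inv f : polyish f -> (forall z, good z -> f z != 0) ->
  polyish (fun z => (f z)^-1).
Proof.
move=> [df [pf [hdf hf]]] nz; exists pf, df; split=> z gz.
  by rewrite -hf // mulf_neq0 // ?nz ?hdf.
by rewrite -hf // mulrA mulVf ?nz // mul1r.
Qed.

Lemma ps_div f g : polyish f -> polyish g -> (forall z, good z -> g z != 0) ->
  polyish (fun z => f z / g z).
Proof. by move=> hf hg nz; apply: ps_mul => //; apply: ps_inv. Qed.

Lemma ps_sum (I : eqType) (r : seq I) (P : pred I) (F : I -> C -> C) :
  (forall i, i \in r -> P i -> polyish (F i)) ->
  polyish (fun z => \sum_(i <- r | P i) F i z).
Proof.
elim: r => [|a r IH] h.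
  by apply: (ps_ext (ps_const 0)) => z; rewrite big_nil.
apply: (@ps_ext (fun z => if P a then F a z + \sum_(i <- r | P i) F i z else \sum_(i <- r | P i) F i z)); last first.
  by move=> z; rewrite big_cons.
case Pa: (P a).
  apply: ps_add; first by apply: h; rewrite ?mem_head.
  by apply: IH => i ir Pi; apply: h => //; rewrite in_cons ir orbT.
by apply: IH => i ir Pi; apply: h => //; rewrite in_cons ir orbT.
Qed.

Lemma ps_prod (I : eqType) (r : seq I) (P : pred I) (F : I -> C -> C) :
  (forall i, i \in r -> P i -> polyish (F i)) ->
  polyish (fun z => \prod_(i <- r | P i) F i z).
Proof.
elim: r => [|a r IH] h.
  by apply: (ps_ext (ps_const 1)) => z; rewrite big_nil.
apply: (@ps_ext (fun z => if P a then F a z * \prod_(i <- r | P i) F i z else \prod_(i <- r | P i) F i z)); last first.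
  by move=> z; rewrite big_cons.
case Pa: (P a).
  apply: ps_mul; first by apply: h; rewrite ?mem_head.
  by apply: IH => i ir Pi; apply: h => //; rewrite in_cons ir orbT.
by apply: IH => i ir Pi; apply: h => //; rewrite in_cons ir orbT.
Qed.

End Polyish.

Module CoreM.


Section Core.
Variable F : numFieldType.

Definition rf (a : F) k := \prod_(i < k) (a + i%:R).

Lemma rfS a k : rf a k.+1 = rf a k * (a + k%:R).
Proof. by rewrite /rf big_ord_recr. Qed.

Lemma rf0 a : rf a 0 = 1.
Proof. by rewrite /rf big_ord0. Qed.

Lemma rf_shift a b k : b = a + 1 -> rf a k * (a + k%:R) = a * rf b k.
Proof.
move=> ->; elim: k => [|k IH]; first by rewrite !rf0 mul1r addr0 mulr1.
rewrite rfS [rf (a+1) _]rfS mulrA -IH -natr1; ring.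
Qed.

Lemma binP n k : ('C(n, k) * n.+1 = 'C(n.+1, k) * (n.+1 - k))%N.
Proof.
case: (leqP k n.+1) => kn.
  by have := mul_bin_down n.+1 k; rewrite /= mulnC => ->; rewrite mulnC.
by rewrite !bin_small // ltnW.
Qed.

Lemma binPR n k : ('C(n, k)%:R : F) = 'C(n.+1, k)%:R * (n%:R + 1 - k%:R) / (n%:R + 1).
Proof.
case: (leqP k n.+1) => kn.
  apply: (@mulIf _ (n%:R + 1)); first by rewrite natr1 pnatr_eq0.
  rewrite mulfVK ?natr1 ?pnatr_eq0 // -natrB // -!natrM; congr (_%:R); exact: binP.
by rewrite !bin_small ?mul0r // ltnW.
Qed.

Lemma binSR n k : ('C(n, k.+1)%:R : F) = 'C(n, k)%:R * (n%:R - k%:R) / (k%:R + 1).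
Proof.
case: (leqP k n) => kn.
  apply: (@mulIf _ (k%:R + 1)); first by rewrite natr1 pnatr_eq0.
  rewrite mulfVK ?natr1 ?pnatr_eq0 // -natrB // -!natrM mulnC mul_bin_left mulnC //.
by rewrite (bin_small kn) bin_small ?mul0r // ltnS ltnW.
Qed.


Lemma pDl (a b : F) : 0 < a -> 0 <= b -> 0 < a + b.
Proof. by move=> ha hb; rewrite (lt_le_trans ha) // lerDl. Qed.
Lemma pDr (a b : F) : 0 <= a -> 0 < b -> 0 < a + b.
Proof. by move=> ha hb; rewrite (lt_le_trans hb) // lerDr. Qed.

Variable x : F.
Hypothesis hx : 0 < x.

Ltac nn := first [ exact: ler0n | exact: ler01 | (apply: ltW; exact: hx)
  | (apply: addr_ge0; nn) | (apply: mulr_ge0; nn) ].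
Ltac pos := first [ exact: hx | exact: ltr01 | (rewrite ltr0n; done)
  | (apply: mulr_gt0; pos) | (rewrite invr_gt0; pos)
  | (apply: pDl; [pos|nn]) | (apply: pDr; [nn|pos])
  | (apply: prodr_gt0 => i _; pos) | (apply: exprn_gt0; pos) ].
Ltac nz := apply: lt0r_neq0; pos.
Ltac sides := repeat (apply/andP; split); first [assumption | nz].

Local Notation y := (2%:R * x).

Definition T n k := (-1)^+k * 'C(n,k)%:R * (rf (y + 1) k / rf (y + n%:R + 1) k).
Definition cc (n : nat) := 2%:R*(2%:R*n%:R+1)*(y+n%:R+1)/((y+2%:R*n%:R+1)*(y+2%:R*n%:R+2%:R)).
Definition G n k := - (k%:R*(y+n%:R+1)*((2%:R*n%:R+1)*(k%:R-1)+n%:R*y))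
  / (n%:R*(n%:R+1)*(y+2%:R*n%:R+1)*(y+2%:R*n%:R+2%:R))
  * ((-1)^+k * 'C(n.+1,k)%:R * (rf (y+1) k / rf (y+n%:R+1) k)).

Lemma rf_up n k : rf (y + n.+1%:R + 1) k = rf (y+n%:R+1) k * (y+n%:R+1+k%:R) / (y+n%:R+1).
Proof.
have h0 : y + n%:R + 1 != 0 by nz.
rewrite (rf_shift (b := y + n.+1%:R + 1)).
  by rewrite [_ * rf _ _]mulrC mulfK.
by rewrite -[n.+1%:R]natr1 addrA.
Qed.

Lemma I1 n k : (0 < n)%N -> T n.+1 k - cc n * T n k = G n k.+1 - G n k.
Proof.
move=> n0; rewrite /T /G /cc rf_up (binPR n k) binSR !rfS [(-1)^+k.+1]exprS.
rewrite -[n.+1%:R]natr1.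
set c1 := 'C(n.+1,k)%:R; set s1 := (-1)^+k; set r1 := rf _ k; set r2 := rf _ k.
have r2n : r2 != 0 by rewrite /r2; nz.
have nn0 : n%:R != 0 :> F by rewrite pnatr_eq0 -lt0n.
field.
by repeat (apply/andP; split); first [assumption | nz].
Qed.

Definition rho (m : nat) := (m%:R+1)*(y+m%:R+1)/(x+m%:R+1)^+2.
Definition Qz m k := (y+m%:R+1)/(2%:R* m%:R*(x+m%:R+1)^+2)*(k%:R*(1-k%:R))
  * ((-1)^+k * 'C(m.+1,k)%:R * (rf (y+1) k / rf (y+m%:R+1) k)).

Lemma I2 m k : (0 < m)%N ->
  (T m.+1 k - rho m * T m k) * (k%:R / (x + k%:R)) = Qz m k.+1 - Qz m k.
Proof.
move=> m0; rewrite /T /Qz /rho rf_up (binPR m k) binSR !rfS [(-1)^+k.+1]exprS.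
rewrite -[m.+1%:R]natr1.
set c1 := 'C(m.+1,k)%:R; set s1 := (-1)^+k; set r1 := rf _ k; set r2 := rf _ k.
have r2n : r2 != 0 by rewrite /r2; nz.
have nn0 : m%:R != 0 :> F by rewrite pnatr_eq0 -lt0n.
field.
by sides.
Qed.

Definition aa (n : nat) := (y+1)/(2%:R*(2%:R*n%:R+1)*(x+n%:R+1)).
Definition bb (n : nat) := (x+2%:R*n%:R+1)*(x+n%:R+1)/(n%:R*(n%:R+1)*(y+2%:R*n%:R+1)*(y+2%:R*n%:R+2%:R)).
Definition w0 (N : F) := (2%:R*N^+2-2%:R*N-1)/(8%:R*N^+2) + (6%:R*N^+3-4%:R*N-1)/(4%:R*N^+2*(N+1)*(2%:R*N+1))*x
            + x^+2/((N+1)*(2%:R*N+1)).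
Definition w1 (N : F) := (4%:R*N+1)/(8%:R*N*(N+1)) + (6%:R*N^+2+4%:R*N+1)/(4%:R*N^+2*(N+1)*(2%:R*N+1))*x.
Definition w2 (N : F) := (2%:R*N+1)/(8%:R*N^+2*(N+1)).
Definition W n k :=
  T n.+1 k * (k%:R * (w0 n%:R + w1 n%:R * k%:R + w2 n%:R * k%:R^+2)) * 2%:R / ((x+n%:R+1)*(y+2%:R*n%:R+1)).

Lemma I3 n k : (0 < n)%N ->
  G n k / (x + k%:R) = aa n * T n.+1 k + bb n * (T n.+1 k * (k%:R / (x + k%:R)))
     + W n k.+1 - W n k.
Proof.
move=> n0; rewrite /W /T /G /aa /bb /w0 /w1 /w2 !rfS !rf_up binSR [(-1)^+k.+1]exprS.
rewrite -[n.+1%:R]natr1.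
set c1 := 'C(n.+1,k)%:R; set s1 := (-1)^+k; set r1 := rf _ k; set r2 := rf _ k.
have r2n : r2 != 0 by rewrite /r2; nz.
have nn0 : n%:R != 0 :> F by rewrite pnatr_eq0 -lt0n.
field.
by sides.
Qed.

Lemma tele N (f : nat -> F) : \sum_(k < N) (f k.+1 - f k) = f N - f 0%N.
Proof. by rewrite -(big_mkord xpredT (fun k => f k.+1 - f k)) telescope_sumr. Qed.

Lemma T_small n k : (n < k)%N -> T n k = 0.
Proof. by move=> nk; rewrite /T bin_small // !(mul0r, oppr0, mulr0). Qed.
Lemma T0 n : T n 0 = 1.
Proof. by rewrite /T bin0 !rf0 expr0 invr1 !mulr1. Qed.
Lemma G0 n : G n 0 = 0.
Proof. by rewrite /G mulr0n !(mul0r, oppr0, mulr0). Qed.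
Lemma G_small n k : (n.+1 < k)%N -> G n k = 0.
Proof. by move=> nk; rewrite /G bin_small // !(mul0r, oppr0, mulr0). Qed.
Lemma Qz0 m : Qz m 0 = 0.
Proof. by rewrite /Qz mulr0n !(mul0r, oppr0, mulr0). Qed.
Lemma Qz_small m k : (m.+1 < k)%N -> Qz m k = 0.
Proof. by move=> nk; rewrite /Qz bin_small // !(mul0r, oppr0, mulr0). Qed.
Lemma W0 n : W n 0 = 0.
Proof. by rewrite /W mulr0n !(mul0r, oppr0, mulr0). Qed.
Lemma W_small n k : (n.+1 < k)%N -> W n k = 0.
Proof. by move=> nk; rewrite /W T_small // !(mul0r, oppr0, mulr0). Qed.

Definition s n := \sum_(k < n.+1) T n k.
Definition zs m := \sum_(k < m.+1) T m k * (k%:R / (x + k%:R)).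
Definition h k := Hx k x.
Definition S n := \sum_(k < n.+1) T n k * h k.

Lemma hS k : h k.+1 = h k + (x + k.+1%:R)^-1.
Proof. by rewrite /h /Hx (big_nat_recr k.+1). Qed.

Lemma s_rec n : (0 < n)%N -> s n.+1 = cc n * s n.
Proof.
move=> n0; apply/eqP; rewrite -subr_eq0; apply/eqP.
have : \sum_(k < n.+2) (T n.+1 k - cc n * T n k) = 0.
  rewrite (eq_bigr (fun k : 'I_n.+2 => G n k.+1 - G n k)); last by move=> k _; rewrite I1.
  by rewrite tele G0 G_small // subrr.
by rewrite sumrB -mulr_sumr [X in _ - _ * X]big_ord_recr /= T_small // addr0.
Qed.

Lemma zs_rec m : (0 < m)%N -> zs m.+1 = rho m * zs m.
Proof.
move=> m0; apply/eqP; rewrite -subr_eq0; apply/eqP.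
have : \sum_(k < m.+2) (T m.+1 k - rho m * T m k) * (k%:R / (x + k%:R)) = 0.
  rewrite (eq_bigr (fun k : 'I_m.+2 => Qz m k.+1 - Qz m k)); last by move=> k _; rewrite I2.
  by rewrite tele Qz0 Qz_small // subrr.
under eq_bigr => k _ do rewrite mulrBl -[rho m * _ * _]mulrA.
by rewrite sumrB -mulr_sumr [X in _ - _ * X]big_ord_recr /= T_small // mul0r addr0.
Qed.

Lemma W1 n : (0 < n)%N -> W n 1 = - aa n.
Proof.
move=> n0; have := I3 0 n0; rewrite G0 mulr0n T0 W0 !(mul0r, mulr0, addr0, subr0, mulr1).
by move/eqP; rewrite eq_sym addrC addr_eq0 => /eqP.
Qed.

Lemma J n k : (0 < n)%N ->
  (T n.+1 k - cc n * T n k) * h k =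
  (G n k.+1 * h k.+1 - W n k.+2) - (G n k * h k - W n k.+1)
  - aa n * T n.+1 k.+1 - bb n * (T n.+1 k.+1 * (k.+1%:R / (x + k.+1%:R))).
Proof.
move=> n0; have e := I3 k.+1 n0.
rewrite I1 // hS mulrDr e; ring.
Qed.

Lemma S_rec n : (0 < n)%N -> S n.+1 = cc n * S n - aa n * s n.+1 - bb n * zs n.+1.
Proof.
move=> n0.
have : \sum_(k < n.+2) (T n.+1 k - cc n * T n k) * h k
   = \sum_(k < n.+2) (((G n k.+1 * h k.+1 - W n k.+2) - (G n k * h k - W n k.+1))
        - (aa n * T n.+1 k.+1 + bb n * (T n.+1 k.+1 * (k.+1%:R / (x + k.+1%:R))))).
  by apply: eq_bigr => k _; rewrite J //; ring.
rewrite sumrB (tele _ (fun k => G n k * h k - W n k.+1)) G0 G_small // W_small //.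
rewrite big_split /= -!mulr_sumr.
have E1 : \sum_(i < n.+2) T n.+1 i.+1 = s n.+1 - 1.
  rewrite /s [X in _ = X - _]big_ord_recl /= T0 [1 + _]addrC addrK.
  rewrite big_ord_recr /= T_small // addr0.
  by apply: eq_bigr => i _; rewrite /bump leq0n.
have E2 : \sum_(i < n.+2) T n.+1 i.+1 * (i.+1%:R / (x + i.+1%:R)) = zs n.+1.
  rewrite /zs [X in _ = X]big_ord_recl /= mulr0n mul0r mulr0 add0r.
  rewrite big_ord_recr /= T_small // mul0r addr0.
  by apply: eq_bigr => i _; rewrite /bump leq0n.
have E3 : \sum_(k < n.+2) (T n.+1 k - cc n * T n k) * h k = S n.+1 - cc n * S n.
  under eq_bigr => k _ do rewrite mulrBl -[cc n * _ * _]mulrA.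
  by rewrite sumrB -mulr_sumr [X in _ - _ * X]big_ord_recr /= T_small // mul0r addr0.
rewrite E1 E2 E3 W1 // => e.
rewrite -[S n.+1](subrK (cc n * S n)) e; ring.
Qed.


Lemma binom0 (z : F) : binom z 0 = 1.
Proof. by rewrite /binom big_ord0 fact0 divr1. Qed.

Lemma binS_l (z : F) k : binom z k.+1 = z / (k%:R + 1) * binom (z - 1) k.
Proof.
rewrite /binom big_ord_recl factS natrM subr0 -natr1.
have kf : (k`!%:R : F) != 0 by rewrite pnatr_eq0 -lt0n fact_gt0.
have k1 : (k%:R + 1 : F) != 0 by rewrite natr1 pnatr_eq0.
rewrite (eq_bigr (fun i : 'I_k => z - 1 - i%:R)); last first.
  by move=> i _; rewrite lift0 -natr1; ring.
by field; sides.
Qed.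

Lemma binS_r (z : F) k : binom z k.+1 = binom z k * (z - k%:R) / (k%:R + 1).
Proof.
rewrite /binom big_ord_recr factS natrM /= -natr1.
have kf : (k`!%:R : F) != 0 by rewrite pnatr_eq0 -lt0n fact_gt0.
have k1 : (k%:R + 1 : F) != 0 by rewrite natr1 pnatr_eq0.
by field; sides.
Qed.

Lemma binom1 (z : F) : binom z 1 = z.
Proof. by rewrite binS_l binom0 add0r divr1 mulr1. Qed.

Lemma binom_up (z : F) k : binom (z + 1) k * (z + 1 - k%:R) = (z + 1) * binom z k.
Proof.
have k1 : (k%:R + 1 : F) != 0 by rewrite natr1 pnatr_eq0.
have := binS_l (z + 1) k; rewrite binS_r addrK => e.
by rewrite -[LHS](divfK k1) e; field; sides.
Qed.

Lemma binom_rf (z : F) k : binom (z + k%:R) k = rf (z + 1) k / k`!%:R.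
Proof.
elim: k => [|k IH]; first by rewrite binom0 rf0 fact0 divr1.
rewrite binS_l.
have -> : z + k.+1%:R - 1 = z + k%:R by rewrite -natr1; ring.
rewrite IH rfS factS natrM -natr1.
have kf : (k`!%:R : F) != 0 by rewrite pnatr_eq0 -lt0n fact_gt0.
have k1 : (k%:R + 1 : F) != 0 by rewrite natr1 pnatr_eq0.
by field; sides.
Qed.

Lemma binom_nat n k : binom (n%:R : F) k = 'C(n, k)%:R.
Proof.
elim: n k => [|n IH] [|k]; rewrite ?binom0 ?bin0 //.
  by rewrite binS_l !mul0r.
rewrite binS_l -natr1 addrK IH.
have k1 : (k%:R + 1 : F) != 0 by rewrite natr1 pnatr_eq0.
apply: (@mulIf _ (k%:R + 1)) => //; rewrite mulrAC mulfVK // natr1 -!natrM natr1.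
by rewrite -natrM [(_ * k.+1)%N]mulnC -mul_bin_diag.
Qed.

Lemma binom_neq0 (z : F) k : (forall i, (i < k)%N -> 0 < z - i%:R) -> binom z k != 0.
Proof.
move=> hz; rewrite /binom mulf_neq0 // ?invr_eq0 ?pnatr_eq0 -?lt0n ?fact_gt0 //.
rewrite prodf_seq_neq0; apply/allP => i _ /=; apply: lt0r_neq0; exact: hz.
Qed.


Definition A n := 4%:R ^+ (n.-1) * (binom (n%:R - 2%:R^-1 : F) n / binom (2%:R * x + (2 * n)%:R) n).
Definition B n := 4%:R ^+ (n.-1) / n%:R
       * (binom (x + n%:R - 2%:R^-1) n
          / (binom (2%:R * x + (2 * n)%:R) n * binom (x + n%:R) n)).

Lemma bY_neq0 n : binom (y + (2 * n)%:R) n != 0.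
Proof.
apply: binom_neq0 => i ilt; rewrite -addrA -natrB; last by apply: leq_trans (ltnW ilt) _; rewrite leq_pmull.
apply: pDl; [pos | nn].
Qed.

Lemma bX_neq0 n : binom (x + n%:R) n != 0.
Proof.
apply: binom_neq0 => i ilt; rewrite -addrA -natrB; last exact: ltnW.
apply: pDl; [pos | nn].
Qed.

Lemma bY_rec n : binom (y + (2 * n.+1)%:R) n.+1 =
  (y + (2*n)%:R + 2%:R)/(n%:R+1) * ((y + (2*n)%:R + 1) * binom (y + (2*n)%:R) n / (y + n%:R + 1)).
Proof.
rewrite binS_l.
have -> : y + (2 * n.+1)%:R - 1 = (y + (2 * n)%:R) + 1 by rewrite mulnS natrD; ring.
have hne : y + (2 * n)%:R + 1 - n%:R != 0.
  have -> : y + (2 * n)%:R + 1 - n%:R = y + n%:R + 1 by rewrite natrM; ring.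
  by nz.
rewrite -[binom (_ + 1) n](mulfK hne) binom_up.
have -> : y + (2 * n)%:R + 1 - n%:R = y + n%:R + 1 by rewrite natrM; ring.
rewrite mulnS natrD; congr (_ * _); ring.
Qed.

Lemma A_rec n : (0 < n)%N -> A n.+1 = cc n * A n.
Proof.
move=> n0; rewrite /A /cc bY_rec binS_l /=.
have -> : n.+1%:R - 2^-1 - 1 = n%:R - 2^-1 :> F by rewrite -natr1; ring.
have e4 : (4%:R : F) ^+ n = 4%:R * 4%:R ^+ n.-1 by rewrite -exprS prednK.
rewrite e4.
have := bY_neq0 n; set bY := binom _ n => bYn.
set bA := binom _ n.
rewrite natrM -natr1.
field; by sides.
Qed.

Lemma B_rec n : (0 < n)%N -> B n.+1 = n%:R*(y+n%:R+1)/(x+n%:R+1)^+2 * B n.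
Proof.
move=> n0; rewrite /B bY_rec !binS_l /=.
have -> : x + n.+1%:R - 2^-1 - 1 = x + n%:R - 2^-1 by rewrite -natr1; ring.
have -> : x + n.+1%:R - 1 = x + n%:R by rewrite -natr1; ring.
have e4 : (4%:R : F) ^+ n = 4%:R * 4%:R ^+ n.-1 by rewrite -exprS prednK.
rewrite e4.
have := bY_neq0 n; set bY := binom _ n => bYn.
have := bX_neq0 n; set bX := binom _ n => bXn.
set bB := binom _ n.
have nn0 : n%:R != 0 :> F by rewrite pnatr_eq0 -lt0n.
rewrite natrM -!natr1.
field; by sides.
Qed.


Lemma HxS (z : F) k : Hx k.+1 z = Hx k z + (z + k.+1%:R)^-1.
Proof. by rewrite /Hx (big_nat_recr k.+1). Qed.
Lemma Hx0 (z : F) : Hx 0 z = 0.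
Proof. by rewrite /Hx big_geq. Qed.

Lemma T11 : T 1 1 = - ((y + 1) / (y + 2%:R)).
Proof. rewrite /T bin1 !rfS !rf0 expr1; field; sides. Qed.

Lemma s_A n : (0 < n)%N -> s n = 2%:R * A n.
Proof.
elim: n => [//|[|n] IH] _.
  rewrite /s /A !big_ord_recr big_ord0 /= add0r T0 T11 expr0 mul1r binom1 binom1.
  have h2 : y + 2%:R != 0 by nz.
  field; by sides.
by rewrite s_rec // IH // [A n.+2]A_rec // mulrCA.
Qed.

Definition Z n := - (2%:R * B n * (y+n%:R+1)*n%:R*(n%:R+1)/(x+n%:R+1)^+2).

Lemma zs_Z n : (0 < n)%N -> zs n.+1 = Z n.
Proof.
elim: n => [//|[|n] IH] _.
  rewrite zs_rec // /zs /Z /B !big_ord_recr big_ord0 /= add0r T0 T11 expr0 !binom1 mulr0n mul0r mulr0 add0r /rho.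
  have h2 : y + 2%:R != 0 by nz.
  have h3 : x + 1 != 0 by nz.
  have h4 : x + 2%:R != 0 by nz.
  have h5 : x + 1 + 1 != 0 by nz.
  field; by sides.
rewrite zs_rec // IH // /Z [B n.+2]B_rec // /rho.
field; by sides.
Qed.

Lemma S_closed n : (0 < n)%N -> S n = A n * (h n + Hn n - 2%:R * Hn (2 * n)) - B n.
Proof.
elim: n => [//|[|n] IH] _.
  have e3 : Hn (2*1) = 1 + 2%:R^-1 :> F by rewrite muln1 /Hn !HxS Hx0 !add0r invr1.
  have e2 : Hn 1 = 1 :> F by rewrite /Hn HxS Hx0 !add0r invr1.
  have e1 : h 1 = (x+1)^-1 by rewrite /h HxS Hx0 add0r.
  have e0 : h 0 = 0 by rewrite /h Hx0.
  rewrite e1 e2 e3 /A /B !binom1 expr0 /S !big_ord_recr big_ord0 /=.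
  rewrite T0 T11 e0 e1.
  have h2 : y + 2%:R != 0 by nz.
  have h3 : x + 1 != 0 by nz.
  field; by sides.
rewrite S_rec // IH // s_A // zs_Z // [A n.+2]A_rec // [B n.+2]B_rec //.
rewrite [h n.+2]/h HxS -/(h n.+1).
rewrite [Hn n.+2]/Hn HxS -/(Hn n.+1).
have -> : (2 * n.+2 = (2 * n.+1).+2)%N by rewrite !mulnS.
rewrite [Hn (2 * n.+1).+2]/Hn [Hx (2 * n.+1).+2 0]HxS [Hx (2 * n.+1).+1 0]HxS -/(Hn (2 * n.+1)).
rewrite /aa /bb /Z /cc.
set an := A n.+1; set bn := B n.+1; set hn := h n.+1; set H1 := Hn n.+1; set H2 := Hn (2 * n.+1).
field; by sides.
Qed.


Lemma core_gen n : (0 < n)%N ->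
  \sum_(0 <= k < n.+1)
     (-1) ^+ k * (binom (n%:R : F) k)
       * (binom (2%:R * x + k%:R) k / binom (2%:R * x + (n + k)%:R) k)
       * Hx k x
  = 4%:R ^+ (n.-1) * (binom (n%:R - 2%:R^-1 : F) n / binom (2%:R * x + (2 * n)%:R) n)
       * (Hx n x + Hn n - 2%:R * Hn (2 * n))
    - 4%:R ^+ (n.-1) / n%:R
       * (binom (x + n%:R - 2%:R^-1) n
          / (binom (2%:R * x + (2 * n)%:R) n * binom (x + n%:R) n)).
Proof.
move=> n0.
have -> : \sum_(0 <= k < n.+1)
     (-1) ^+ k * (binom (n%:R : F) k)
       * (binom (2%:R * x + k%:R) k / binom (2%:R * x + (n + k)%:R) k)
       * Hx k x = S n.
  rewrite big_mkord /S; apply: eq_bigr => k _.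
  rewrite binom_nat binom_rf natrD addrA binom_rf /T /h.
  have kf : (k`!%:R : F) != 0 by rewrite pnatr_eq0 -lt0n fact_gt0.
  have r2n : rf (y + n%:R + 1) k != 0 by nz.
  field; by sides.
by rewrite S_closed.
Qed.

End Core.

End CoreM.




Section Final.
Variable R : realType.
Notation C := (R[i]).

Lemma ps_binom (good : C -> Prop) g k : polyish good g -> polyish good (fun z => binom (g z) k).
Proof.
move=> hg; rewrite /binom; apply: ps_mul; last exact: ps_const.
apply: ps_prod => i _ _; apply: ps_sub => //; exact: ps_const.
Qed.

Lemma binom_nat_neq0 (a k : nat) : (k <= a)%N -> binom (a%:R : C) k != 0.
Proof.
move=> ka; rewrite /binom mulf_neq0 // ?invr_eq0 ?pnatr_eq0 -?lt0n ?fact_gt0 //.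
rewrite prodf_seq_neq0; apply/allP => i _ /=.
rewrite -natrB; last by apply: leq_trans ka; exact: ltnW.
by rewrite pnatr_eq0 subn_eq0 -ltnNge (leq_trans _ ka).
Qed.

End Final.

Unset Implicit Arguments.
Theorem theorem3 (R : realType) (n : nat) (x : R[i])
  (hn : (0 < n)%N)
  (hH : forall j : nat, (1 <= j <= n)%N -> x + j%:R != 0)
  (hB1 : forall k : nat, (k <= n)%N -> binom (2%:R * x + (n + k)%:R) k != 0)
  (hB2 : binom (2%:R * x + (2 * n)%:R) n != 0)
  (hB3 : binom (x + n%:R) n != 0) :
  \sum_(0 <= k < n.+1)
     (-1) ^+ k * (binom (n%:R : R[i]) k)
       * (binom (2%:R * x + k%:R) k / binom (2%:R * x + (n + k)%:R) k)
       * Hx k x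
  = 4%:R ^+ (n.-1) * (binom (n%:R - 2%:R^-1 : R[i]) n / binom (2%:R * x + (2 * n)%:R) n)
       * (Hx n x + Hn n - 2%:R * Hn (2 * n))
    - 4%:R ^+ (n.-1) / n%:R
       * (binom (x + n%:R - 2%:R^-1) n
          / (binom (2%:R * x + (2 * n)%:R) n * binom (x + n%:R) n)).
Proof.
set good : R[i] -> Prop := fun z =>
  [/\ forall j : nat, (1 <= j <= n)%N -> z + j%:R != 0,
      forall k : nat, (k <= n)%N -> binom (2%:R * z + (n + k)%:R) k != 0,
      binom (2%:R * z + (2 * n)%:R) n != 0 &
      binom (z + n%:R) n != 0].
pose E z := \sum_(0 <= k < n.+1)
     (-1) ^+ k * (binom (n%:R : R[i]) k)
       * (binom (2%:R * z + k%:R) k / binom (2%:R * z + (n + k)%:R) k)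
       * Hx k z
  - (4%:R ^+ (n.-1) * (binom (n%:R - 2%:R^-1 : R[i]) n / binom (2%:R * z + (2 * n)%:R) n)
       * (Hx n z + Hn n - 2%:R * Hn (2 * n))
    - 4%:R ^+ (n.-1) / n%:R
       * (binom (z + n%:R - 2%:R^-1) n
          / (binom (2%:R * z + (2 * n)%:R) n * binom (z + n%:R) n))).
have psHx k : (k <= n)%N -> polyish good (Hx k).
  move=> kn; rewrite /Hx; apply: ps_sum => j; rewrite mem_index_iota => /andP[j1 jk] _.
  apply: ps_inv; first by apply: ps_add; [exact: ps_id | exact: ps_const].
  by move=> z [h _ _ _]; apply: h; rewrite j1 /= (leq_trans _ kn).
have psE : polyish good E.
  apply: ps_sub.
    apply: ps_sum => k; rewrite mem_index_iota => /andP[_ kn] _.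
    apply: ps_mul; last exact: psHx.
    apply: ps_mul; first exact: ps_const.
    apply: ps_div.
    - apply: ps_binom; apply: ps_add => //; [apply: ps_mul => //; [exact: ps_const|exact: ps_id] | exact: ps_const].
    - apply: ps_binom; apply: ps_add => //; [apply: ps_mul => //; [exact: ps_const|exact: ps_id] | exact: ps_const].
    by move=> z [_ h _ _]; apply: h.
  apply: ps_sub.
    apply: ps_mul; last first.
      apply: ps_sub; last exact: ps_const.
      by apply: ps_add; [exact: psHx | exact: ps_const].
    apply: ps_mul; first exact: ps_const.
    apply: ps_div; first exact: ps_const.
      apply: ps_binom; apply: ps_add => //; [apply: ps_mul => //; [exact: ps_const|exact: ps_id] | exact: ps_const].
    by move=> z [_ _ h _].
  apply: ps_mul; first exact: ps_const.
  apply: ps_div.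
  - apply: ps_binom; apply: ps_sub; last exact: ps_const.
    by apply: ps_add; [exact: ps_id | exact: ps_const].
  - apply: ps_mul; apply: ps_binom; apply: ps_add; try exact: ps_const; try exact: ps_id.
    by apply: ps_mul; [exact: ps_const|exact: ps_id].
  by move=> z [_ _ h1 h2]; rewrite mulf_neq0.
have goodN (N : nat) : good (N.+1%:R).
  have e1 m : 2%:R * (N.+1%:R : R[i]) + m%:R = (2 * N.+1 + m)%:R by rewrite natrD natrM.
  split.
  - by move=> j _; rewrite -natrD pnatr_eq0 addSn.
  - by move=> k _; rewrite e1 binom_nat_neq0 // addnA leq_addl.
  - by rewrite e1 binom_nat_neq0 // (leq_trans _ (leq_addl _ _)) // -{1}(mul1n n) leq_mul2r ltnW ?orbT.
  - by rewrite -natrD binom_nat_neq0 // leq_addl.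
have EN (N : nat) : E (N.+1%:R) = 0.
  by apply/eqP; rewrite subr_eq0; apply/eqP; apply: CoreM.core_gen => //; rewrite ltr0n.
case: psE => d [p [hd hp]].
have p0 : p = 0.
  apply: (@roots_geq_poly_eq0 _ p [seq (N.+1)%:R | N <- iota 0 (size p)]).
  - apply/allP => z /mapP[N _ ->]; rewrite /root -hp ?EN ?mul0r //.
  - rewrite map_inj_uniq ?iota_uniq // => a b /eqP; rewrite eqr_nat => /eqP[].
    done.
  - by rewrite size_map size_iota.
have gx : good x by [].
have := hp x gx; rewrite p0 horner0 => /eqP; rewrite mulf_eq0 (negPf (hd x gx)) orbF.
by rewrite /E subr_eq0 => /eqP.
Qed.
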